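(* Let $\epsilon>0$, $\beta>0$, $K,T\in\mathbb N_+$ and $N\ge 3KT^2/\beta$. For any $\epsilon$-differentially private online learner $\mathcal A$ of $\mathrm{Point}_N$ whose outputs always lie in $\mathrm{Point}^K_N$, there exists an adversary $\mathcal B$ such that $$\mathbb E[M_{\mathcal A}]=\Omega\left(\min\left(\frac{\log(T/\beta)}{\epsilon},\,T\right)\right).$$
   Context: $\mathrm{Point}_N=\{f^{(i)}:i\in[N]\}$ on domain $[N]$ with $f^{(i)}(x)=\mathbb 1\{x=i\}$; $\mathrm{Point}^K_N$ is the class of functions $[N]\to\{0,1\}$ equal to $1$ on at most $K$ points. Online game: an oblivious adversary picks $f^*\in\mathrm{Point}_N$ and $x_1,\dots,x_T\in[N]$; for $t=1,\dots,T$ the randomized learner outputs $\hat f_t$ depending only on the first $t-1$ labelled pairs, then receives $(x_t,f^*(x_t))$; $M_{\mathcal A}=\sum_t\mathbb 1\{\hat f_t(x_t)\ne f^*(x_t)\}$, expectation over the learner's randomness. $\epsilon$-DP: for any two labelled input sequences $\tau,\tau'$ differing in exactly one position and any set $S$ of output sequences of predictors, $\Pr(\mathcal A(\tau)\in S)\le e^{\epsilon}\Pr(\mathcal A(\tau')\in S)$. *)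

(* Defs.v *)
From HB Require Import structures.
From mathcomp Require Import all_boot all_order all_algebra.
From mathcomp Require Import reals.
From mathcomp Require Import sequences.
From mathcomp.analysis Require Import exp.
Set Implicit Arguments. Unset Strict Implicit. Unset Printing Implicit Defensive.
Import Order.TTheory GRing.Theory Num.Theory.
Local Open Scope ring_scope.

Definition predictor (N : nat) := {ffun 'I_N -> bool}.

Definition point (N : nat) (i : 'I_N) : predictor N := [ffun x => x == i].

Definition in_PointK (N K : nat) (h : predictor N) : bool :=
  (#|[set x | h x]| <= K)%N.

Definition lab_seq (N T : nat) := {ffun 'I_T -> 'I_N * bool}.
Definition out_seq (N T : nat) := {ffun 'I_T -> predictor N}.

(* A randomized learner: for every labelled input sequence, a probability
   distribution (pmf) on the finite set of output sequences. *)
Definition learner (R : realType) (N T : nat) :=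
  lab_seq N T -> {ffun out_seq N T -> R}.

Definition is_distr_learner (R : realType) N T (A : learner R N T) : Prop :=
  forall tau, (forall o, 0 <= A tau o) /\ \sum_(o : out_seq N T) A tau o = 1.

(* online: the joint law of (hat f_1, ..., hat f_t) depends only on the
   first t-1 labelled pairs (indices s < t, 0-based) *)
Definition is_online (R : realType) N T (A : learner R N T) : Prop :=
  forall (t : 'I_T) (tau tau' : lab_seq N T),
    (forall s : 'I_T, (s < t)%N -> tau s = tau' s) ->
    forall u : out_seq N T,
      \sum_(o : out_seq N T | [forall s : 'I_T, (s <= t)%N ==> (o s == u s)]) A tau o =
      \sum_(o : out_seq N T | [forall s : 'I_T, (s <= t)%N ==> (o s == u s)]) A tau' o.

Definition outputs_in_PointK (R : realType) N T K (A : learner R N T) : Prop :=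
  forall tau o, A tau o != 0 -> forall t, in_PointK K (o t).

Definition is_DP (R : realType) N T (eps : R) (A : learner R N T) : Prop :=
  forall tau tau' : lab_seq N T,
    #|[set t | tau t != tau' t]| = 1%N ->
    forall S : {set out_seq N T},
      \sum_(o in S) A tau o <= expR eps * \sum_(o in S) A tau' o.

(* the labelled sequence produced by the oblivious adversary (f^(i), xs) *)
Definition adv_input N T (i : 'I_N) (xs : {ffun 'I_T -> 'I_N}) : lab_seq N T :=
  [ffun t => (xs t, point i (xs t))].

Definition mistakes N T (i : 'I_N) (xs : {ffun 'I_T -> 'I_N}) (o : out_seq N T) : nat :=
  \sum_(t : 'I_T) (o t (xs t) != point i (xs t)).

Definition exp_mistakes (R : realType) N T (A : learner R N T)
    (i : 'I_N) (xs : {ffun 'I_T -> 'I_N}) : R :=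
  \sum_(o : out_seq N T) A (adv_input i xs) o * (mistakes i xs o)%:R.

(* Main.v *)
Require Import Defs.
From HB Require Import structures.
From mathcomp Require Import all_boot all_order all_algebra.
From mathcomp Require Import reals sequences.
From mathcomp.analysis Require Import exp.
From mathcomp Require Import ring lra.
Import Order.TTheory GRing.Theory Num.Theory.
Local Open Scope ring_scope.

Definition hyb N T (x0 x : 'I_N) (s : nat) : lab_seq N T :=
  [ffun t : 'I_T => if (t < s)%N then (x, true) else (x0, false)].
Arguments hyb {N} T x0 x s.

Lemma hyb_diff N T (x0 x : 'I_N) s (hs : (s < T)%N) :
  #|[set t | hyb T x0 x s.+1 t != hyb T x0 x s t]| = 1%N.
Proof.
rewrite (_ : [set t | _] = [set Ordinal hs]) ?cards1 //; apply/setP => t.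
rewrite !inE !ffunE -val_eqE /= ltnS leq_eqVlt.
by case: (ltngtP t s) => //= _; rewrite ?eqxx // xpair_eqE andbF.
Qed.

Lemma group_priv (R : realType) N T (eps : R) (A : learner R N T) (x0 x : 'I_N)
  (HD : is_distr_learner A) (Hdp : is_DP eps A) (S : {set out_seq N T}) s :
  (s <= T)%N ->
  \sum_(o in S) A (hyb T x0 x s) o <= expR (s%:R * eps) * \sum_(o in S) A (hyb T x0 x 0) o.
Proof.
elim: s => [|s IH] hs; first by rewrite mul0r expR0 mul1r.
have H1 := Hdp _ _ (@hyb_diff N T x0 x s hs) S.
apply: (le_trans H1).
rewrite -natr1 mulrDl mul1r addrC expRD -mulrA ler_wpM2l ?expR_ge0 //.
exact: IH (ltnW hs).
Qed.

Definition cano N T (t : 'I_T) (o : out_seq N T) : out_seq N T :=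
  [ffun s : 'I_T => if (s <= t)%N then o s else [ffun=> false]].
Arguments cano {N T} t o.

Lemma cano_agree N T (t : 'I_T) (o u : out_seq N T) :
  (cano t u == u) && [forall s : 'I_T, (s <= t)%N ==> (o s == u s)] = (u == cano t o).
Proof.
apply/idP/idP.
  case/andP => /eqP Hu /forallP Hf; apply/eqP/ffunP => s; rewrite ffunE.
  case: ifP => hst; last by rewrite -Hu ffunE hst.
  by have := Hf s; rewrite hst implyTb => /eqP.
move/eqP => ->; apply/andP; split.
  by apply/eqP/ffunP => s; rewrite !ffunE; case: ifP => // hs; rewrite hs.
by apply/forallP => s; apply/implyP => hs; rewrite ffunE hs.
Qed.
Arguments cano_agree {N T} t o u.

Lemma marg_cano (R : realType) N T (A : learner R N T) (t : 'I_T) (x : 'I_N) tau :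
  \sum_(o : out_seq N T | o t x) A tau o =
  \sum_(u : out_seq N T | (cano t u == u) && u t x)
     \sum_(o : out_seq N T | [forall s : 'I_T, (s <= t)%N ==> (o s == u s)]) A tau o.
Proof.
under [RHS]eq_bigr => u _ do rewrite big_mkcond.
rewrite (exchange_big_dep predT) //= [LHS]big_mkcond; apply: eq_bigr => o _.
rewrite big_mkcond /= (bigD1 (cano t o)) //= big1 ?addr0; last first.
  move=> u hu; case: ifP => //; rewrite andbT; case/andP => h1 h2; case: ifP => // h3.
  by move: hu; rewrite -(cano_agree t o u) h1 h3.
have := cano_agree t o (cano t o); rewrite eqxx => /andP [-> ->].
by rewrite andbT ffunE leqnn.
Qed.

Lemma online_marg (R : realType) N T (A : learner R N T) (Hon : is_online A)
  (t : 'I_T) (x : 'I_N) (tau tau' : lab_seq N T) :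
  (forall s : 'I_T, (s < t)%N -> tau s = tau' s) ->
  \sum_(o : out_seq N T | o t x) A tau o = \sum_(o : out_seq N T | o t x) A tau' o.
Proof.
move=> Hag; rewrite !marg_cano; apply: eq_bigr => u _; exact: Hon.
Qed.

Lemma avg_exists (R : realType) (I : finType) (x0 : I) (F : I -> R) :
  exists x, F x * #|I|%:R <= \sum_i F i.
Proof.
case: (arg_minP F (isT : predT x0)) => x _ Hx; exists x.
rewrite -sum1_card natr_sum mulr_sumr; apply: ler_sum => i _.
by rewrite mulr1 Hx.
Qed.

Lemma count_min (R : realType) (y : R) (T : nat) :
  Num.min y T%:R <= \sum_(t < T) (if t%:R <= y then 1 else 0 : R).
Proof.
elim: T => [|T IH]; first by rewrite big_ord0 ge_min lexx orbT.
rewrite big_ord_recr /=.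
case: ifP => hT.
  move: IH; rewrite (_ : Num.min y T%:R = T%:R); last by apply/min_idPr.
  move=> IH; rewrite ge_min; apply/orP; right; rewrite -natr1; exact: lerD.
have hy : y < T%:R by rewrite ltNge hT.
move: IH; rewrite (_ : Num.min y T%:R = y); last by apply/min_idPl/ltW.
move=> IH; rewrite addr0 ge_min; apply/orP; left; exact IH.
Qed.

Lemma sum_x_le (R : realType) N T K (A : learner R N T)
  (HD : is_distr_learner A) (Hout : outputs_in_PointK K A) tau (t : 'I_T) :
  \sum_(x : 'I_N) \sum_(o : out_seq N T | o t x) A tau o <= K%:R.
Proof.
rewrite (exchange_big_dep predT) //=.
have -> : K%:R = \sum_(o : out_seq N T) A tau o * K%:R.
  by rewrite -mulr_suml (proj2 (HD tau)) mul1r.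
apply: ler_sum => o _; rewrite sumr_const -(mulr_natr (A tau o)).
have [->|hA] := eqVneq (A tau o) 0; first by rewrite !mul0r.
rewrite ler_wpM2l ?(proj1 (HD tau)) // ler_nat.
have := Hout tau o hA t; rewrite /in_PointK.
by rewrite (_ : #|[set x | o t x]| = #|[pred x | o t x]|) // cardsE.
Qed.

Lemma exp_mist_eq (R : realType) N T (A : learner R N T)
  (HD : is_distr_learner A) (x : 'I_N) :
  exp_mistakes A x [ffun=> x] =
  \sum_(t : 'I_T) (1 - \sum_(o : out_seq N T | o t x) A (adv_input x [ffun=> x]) o).
Proof.
rewrite /exp_mistakes /mistakes.
under eq_bigr do rewrite natr_sum mulr_sumr.
rewrite exchange_big /=; apply: eq_bigr => t _.
set tau := adv_input x [ffun=> x].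
apply: (@eq_trans _ _ (\sum_(o : out_seq N T) A tau o - \sum_(o : out_seq N T | o t x) A tau o)); last by rewrite (proj2 (HD _)).
rewrite [X in _ = _ - X]big_mkcond -sumrB.
apply: eq_bigr => o _; rewrite !ffunE eqxx.
by case: (o t x) => /=; rewrite ?mulr0 ?mulr1 ?subrr ?subr0.
Qed.

Theorem corollary3 :
  forall R : realType, exists c : R, 0 < c /\
  forall (eps beta : R) (K T N : nat),
    0 < eps -> 0 < beta -> (0 < K)%N -> (0 < T)%N ->
    (3 * K * T ^ 2)%:R / beta <= N%:R ->
    forall A : learner R N T,
      is_distr_learner A -> is_online A -> outputs_in_PointK K A ->
      is_DP eps A ->
      exists (i : 'I_N) (xs : {ffun 'I_T -> 'I_N}),
        c * Num.min (ln (T%:R / beta) / eps) T%:R <= exp_mistakes A i xs.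
Proof.
move=> R; exists (1/2); split; first by rewrite divr_gt0.
move=> eps beta K T N he hb hK hT hN A HD Hon Hout Hdp.
have hN0 : (0 < N)%N.
  rewrite -(ltr0n R); apply: lt_le_trans hN.
  by rewrite divr_gt0 // ltr0n !muln_gt0 hK hT.
pose x0 : 'I_N := Ordinal hN0.
pose rho := hyb T x0 x0 0.
pose p (t : 'I_T) (x : 'I_N) := \sum_(o : out_seq N T | o t x) A rho o.
have pge0 : forall t x, 0 <= p t x.
  by move=> t x; apply: sumr_ge0 => o _; exact: (proj1 (HD _) _).
have Hsum : \sum_(x : 'I_N) \sum_(t : 'I_T) p t x <= (T * K)%:R.
  rewrite exchange_big /=.
  rewrite (_ : (T*K)%:R = \sum_(t : 'I_T) K%:R); last first.
    by rewrite sumr_const card_ord -[RHS]mulr_natr -natrM mulnC.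
  apply: ler_sum => t _; exact: (@sum_x_le R N T K A HD Hout rho t).
have [x Hx] := @avg_exists R _ x0 (fun x => \sum_(t : 'I_T) p t x).
rewrite card_ord in Hx.
exists x, [ffun=> x].
rewrite exp_mist_eq //.
set y := ln (T%:R / beta) / eps.
apply: (@le_trans _ _ (1/2 * \sum_(t < T) (if t%:R <= y then 1 else 0))).
  rewrite ler_wpM2l ?count_min // divr_ge0 //.
rewrite mulr_sumr; apply: ler_sum => t _.
set tau := adv_input x [ffun=> x].
have Pge : \sum_(o : out_seq N T | o t x) A tau o <= 1.
  rewrite -(proj2 (HD tau)) big_mkcond; apply: ler_sum => o _.
  case: ifP => _ //; exact: (proj1 (HD tau) o).
case: ifP => hty; last by rewrite mulr0 subr_ge0.
rewrite mulr1.
have E1 : \sum_(o : out_seq N T | o t x) A tau o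
          = \sum_(o : out_seq N T | o t x) A (hyb T x0 x t) o.
  by apply: online_marg => // s hs; rewrite !ffunE hs eqxx.
have hh : forall tau', \sum_(o in [set o : out_seq N T | o t x]) A tau' o
                      = \sum_(o : out_seq N T | o t x) A tau' o.
  by move=> tau'; apply: eq_bigl => o; rewrite inE.
have E2 : \sum_(o : out_seq N T | o t x) A (hyb T x0 x t) o
          <= expR (t%:R * eps) * p t x.
  have := @group_priv R N T eps A x0 x HD Hdp [set o : out_seq N T | o t x] t (ltnW (ltn_ord t)).
  rewrite !hh (_ : hyb T x0 x 0 = rho); first exact: id.
  by apply/ffunP => s; rewrite !ffunE.
have E3 : expR (t%:R * eps) <= T%:R / beta.
  rewrite -[X in _ <= X]lnK; last by rewrite posrE divr_gt0 // ltr0n.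
  by rewrite ler_expR -ler_pdivlMr.
have E4 : p t x * N%:R <= (T*K)%:R.
  apply: le_trans Hsum; apply: le_trans Hx; rewrite ler_wpM2r //.
  rewrite (bigD1 t) //= lerDl; exact: sumr_ge0.
set e := expR (t%:R * eps).
have e0 : 0 <= e by exact: expR_ge0.
have Hep : e * p t x * N%:R <= N%:R / 3.
  rewrite -mulrA; apply: le_trans (_ : T%:R / beta * (T * K)%:R <= _).
    by apply: ler_pM => //; rewrite mulr_ge0.
  apply: le_trans (_ : (3 * K * T ^ 2)%:R / beta / 3 <= _); last first.
    by rewrite ler_wpM2r // invr_ge0.
  rewrite !natrM le_eqVlt; apply/orP; left; apply/eqP; field.
  exact: lt0r_neq0.
have N0 : 0 < N%:R :> R by rewrite ltr0n.
have : e * p t x <= 1/3.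
  rewrite -(ler_pM2r N0); move: Hep; lra.
rewrite E1; move: E2; rewrite -/e; lra.
Qed.
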